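(* Let $M=([n],\mathscr C)$ be a simple matroid. Let $B$ be the set of circuits $C\in\mathscr C$ that cannot be obtained by pasting, i.e. for which there are no circuits $C_1,C_2$ with $|C_1\cap C_2|=1$ and $C_1\triangle C_2=C$. Then $B$ is a tropical basis of $M$.
   Context: A matroid is simple if every circuit has cardinality greater than $2$. Let ${\bf TP}^{n-1}$ be the tropical projective space over $(\mathbb R\cup\{-\infty\},\max,+)$. For a circuit $C$, $V(C)$ is the set of $x\in{\bf TP}^{n-1}$ such that $\max\{x_i:i\in C\}$ is attained at least twice. For $B\subseteq\mathscr C$, set $V(B)=\bigcap_{C\in B}V(C)$. A subset $B\subseteq\mathscr C$ is a tropical basis if $V(B)=V(\mathscr C)$. $\triangle$ denotes symmetric difference. *)

(* Defs.v *)
From HB Require Import structures.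
From mathcomp Require Import all_boot all_order all_algebra.
From mathcomp Require Import reals.
Set Implicit Arguments. Unset Strict Implicit. Unset Printing Implicit Defensive.
Import Order.TTheory GRing.Theory Num.Theory.
Local Open Scope ring_scope.

Definition is_matroid_circuits (n : nat) (circ : {set {set 'I_n}}) : Prop :=
  [/\ set0 \notin circ,
      (forall C1 C2, C1 \in circ -> C2 \in circ -> C1 \subset C2 -> C1 = C2) &
      (forall C1 C2 e, C1 \in circ -> C2 \in circ -> C1 != C2 ->
         e \in C1 :&: C2 ->
         exists2 C3, C3 \in circ & C3 \subset (C1 :|: C2) :\ e)].

Definition simple_matroid (n : nat) (circ : {set {set 'I_n}}) : Prop :=
  forall C, C \in circ -> (2 < #|C|)%N.

(** Tropical numbers R ∪ {-oo}: [None] is -oo. *)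
Definition trop (R : realType) := option R.

Definition trop_le (R : realType) (a b : trop R) : bool :=
  match a, b with
  | None, _ => true
  | Some _, None => false
  | Some x, Some y => x <= y
  end.

(** Representatives of points of TP^{n-1}: vectors in (R ∪ {-oo})^n not
    identically -oo.  (All sets V(.) below are invariant under adding a
    real constant, so working with representatives is harmless.) *)
Definition TP_point (R : realType) (n : nat) (x : 'I_n -> trop R) : Prop :=
  exists i, x i != None.

Definition in_V (R : realType) (n : nat) (C : {set 'I_n}) (x : 'I_n -> trop R)
  : Prop :=
  exists i j, [/\ i \in C, j \in C, i != j, x i = x j &
                  forall k, k \in C -> trop_le (x k) (x i)].

Definition V_of (R : realType) (n : nat) (B : {set {set 'I_n}})
  (x : 'I_n -> trop R) : Prop :=
  TP_point x /\ forall C, C \in B -> in_V C x.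

Definition tropical_basis (R : realType) (n : nat)
  (circ B : {set {set 'I_n}}) : Prop :=
  B \subset circ /\
  forall x : 'I_n -> trop R, V_of B x <-> V_of circ x.

Definition nonpasted (n : nat) (circ : {set {set 'I_n}}) : {set {set 'I_n}} :=
  [set C in circ | ~~ [exists C1 in circ, exists C2 in circ,
      (#|C1 :&: C2| == 1)%N && ((C1 :\: C2) :|: (C2 :\: C1) == C)]].

(* Main.v *)
Require Import Defs.
From mathcomp Require Import all_boot all_order all_algebra reals.
From mathcomp Require Import zify.
Import Order.TTheory GRing.Theory Num.Theory.

Section Aux.
Variable R : realType.
Variable n : nat.
Implicit Types a b c : trop R.

Lemma tle_trans a b c : trop_le a b -> trop_le b c -> trop_le a c.
Proof. by case: a => [a|]; case: b => [b|]; case: c => [c|] //=; apply: le_trans. Qed.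

Lemma tle_total a b : trop_le a b || trop_le b a.
Proof. by case: a => [a|]; case: b => [b|] //=; apply: le_total. Qed.

Lemma tle_anti a b : trop_le a b -> trop_le b a -> a = b.
Proof.
case: a => [a|]; case: b => [b|] //= h1 h2.
by congr Some; apply/eqP; rewrite eq_le h1 h2.
Qed.

Lemma core (x : 'I_n -> trop R) (C1 C2 : {set 'I_n}) e i j i' :
  C1 :&: C2 = [set e] ->
  i \in C1 -> j \in C1 -> i != j -> x i = x j ->
  (forall k, k \in C1 -> trop_le (x k) (x i)) -> i != e ->
  i' \in C2 -> (forall k, k \in C2 -> trop_le (x k) (x i')) -> i' != e ->
  trop_le (x i') (x i) ->
  in_V ((C1 :\: C2) :|: (C2 :\: C1)) x.
Proof.
move=> hI hi hj hij hx b1 hie hi' b2 hi'e hle.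
have mem1 : forall k, k \in C1 -> k != e -> k \notin C2.
  move=> k hk hke; apply/negP => hk2.
  have : k \in C1 :&: C2 by rewrite inE hk hk2.
  by rewrite hI inE (negbTE hke).
have mem2 : forall k, k \in C2 -> k != e -> k \notin C1.
  move=> k hk hke; apply/negP => hk2.
  have : k \in C1 :&: C2 by rewrite inE hk hk2.
  by rewrite hI inE (negbTE hke).
have he : e \in C1 :&: C2 by rewrite hI set11.
move: he; rewrite inE => /andP[he1 he2].
have bnd : forall k, k \in (C1 :\: C2) :|: (C2 :\: C1) -> trop_le (x k) (x i).
  move=> k; rewrite !inE => /orP[/andP[_ hk]|/andP[_ hk]]; first exact: b1.
  exact: tle_trans (b2 _ hk) hle.
have iD : i \in (C1 :\: C2) :|: (C2 :\: C1) by rewrite !inE hi mem1.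
have [hje|hje] := eqVneq j e.
- exists i, i'; split => //.
  + by rewrite !inE hi' mem2.
  + by apply/negP => /eqP hii; move: (mem1 _ hi hie); rewrite hii hi'.
  + apply: tle_anti; last exact: hle.
    by rewrite hx hje; apply: b2.
- exists i, j; split => //.
  by rewrite !inE hj mem1.
Qed.

Arguments core {x C1 C2 e i j i'}.

Lemma paste (x : 'I_n -> trop R) (C1 C2 : {set 'I_n}) :
  #|C1 :&: C2| = 1%N -> in_V C1 x -> in_V C2 x ->
  in_V ((C1 :\: C2) :|: (C2 :\: C1)) x.
Proof.
move=> /eqP/cards1P[e hI] [i [j [hi hj hij hx b1]]] [i' [j' [hi' hj' hij' hx' b2]]].
have [k [hk hke bk]] : exists k, [/\ k \in C1, k != e & forall z, z \in C1 -> trop_le (x z) (x k)].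
  have [hie|hie] := eqVneq i e.
  - exists j; split => //; first by rewrite -hie eq_sym.
    by move=> z hz; rewrite -hx; apply: b1.
  - by exists i.
have [k' [hk' hke' bk']] : exists k, [/\ k \in C2, k != e & forall z, z \in C2 -> trop_le (x z) (x k)].
  have [hie|hie] := eqVneq i' e.
  - exists j'; split => //; first by rewrite -hie eq_sym.
    by move=> z hz; rewrite -hx'; apply: b2.
  - by exists i'.
have [l [hl hkl hxl]] : exists l, [/\ l \in C1, k != l & x k = x l].
  have [hik|hik] := eqVneq i k.
  - by exists j; rewrite -hik.
  - exists i; split => //; first by rewrite eq_sym.
    by apply: tle_anti; [apply: b1 | apply: bk].
have [l' [hl' hkl' hxl']] : exists l, [/\ l \in C2, k' != l & x k' = x l].
  have [hik|hik] := eqVneq i' k'.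
  - by exists j'; rewrite -hik.
  - exists i'; split => //; first by rewrite eq_sym.
    by apply: tle_anti; [apply: b2 | apply: bk'].
case/orP: (tle_total (x k') (x k)) => hle.
  exact: (core hI hk hl hkl hxl bk hke hk' bk' hke' hle).
rewrite setUC; apply: (core _ hk' hl' hkl' hxl' bk' hke' hk bk hke hle).
by rewrite setIC.
Qed.

End Aux.
Arguments paste {R n x C1 C2}.

Theorem lemma3 (R : realType) (n : nat) (circ : {set {set 'I_n}}) :
  is_matroid_circuits circ -> simple_matroid circ ->
  tropical_basis R circ (nonpasted circ).
Proof.
move=> _ hs.
have sub : nonpasted circ \subset circ.
  by apply/subsetP => C; rewrite inE => /andP[].
split => // x; split => [[tp H]|[tp H]]; split => // C hC; last first.
  by apply: H; apply: (subsetP sub).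
have key : forall m (C : {set 'I_n}), (#|C| < m)%N -> C \in circ -> in_V C x.
  elim=> [//|m IH] D hD hDc.
  have [hn|hn] := boolP (D \in nonpasted circ); first exact: H.
  move: hn; rewrite inE hDc /= negbK => /existsP[C1 /andP[hC1 /existsP[C2 /andP[hC2 /andP[/eqP h1 /eqP hDD]]]]].
  rewrite -hDD.
  have s1 := hs _ hC1; have s2 := hs _ hC2.
  have hdis : (C1 :\: C2) :&: (C2 :\: C1) = set0.
    by apply/setP => z; rewrite !inE; case: (z \in C1); case: (z \in C2).
  have e1 : #|C1 :\: C2| = (#|C1| - 1)%N by rewrite cardsD h1.
  have e2 : #|C2 :\: C1| = (#|C2| - 1)%N by rewrite cardsD setIC h1.
  have eD : #|D| = (#|C1 :\: C2| + #|C2 :\: C1|)%N by rewrite -hDD cardsU hdis cards0 subn0.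
  apply: paste => //; apply: IH => //; lia.
exact: (key _ _ (ltnSn _) hC).
Qed.
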